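(* Let $\sigma$ be an optimal solution of a Bin Packing instance, let $b_1,\dots,b_r$ be the bins of $\sigma$ that contain small items and exactly one large item, in an arbitrary order, and let $L$ be the collection of the large items in these bins. Process $j=1,\dots,r$ and place into $b_j$ (which keeps its small items) the largest item of $L$ not yet placed into $b_1,\dots,b_{j-1}$ whose size plus the total size of the small items of $b_j$ is at most $T$. Then in each step such an item exists, and the resulting packing (all other bins unchanged) is a feasible, and hence optimal, solution.
   Context: Bin Packing: given a sequence of items with sizes in $\mathbb{Q}_{\ge 0}$ and a capacity $T$, a solution assigns the items to bins so that the total size in each bin is at most $T$; an optimal solution uses the minimum number of bins. A subsequence of items is 3-incompatible if no three distinct items of it have total size at most $T$; the large items form a largest 3-incompatible subsequence and the remaining items are small. *)

(* Defs.v *)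
From HB Require Import structures.
From mathcomp Require Import all_boot all_order all_algebra.
Set Implicit Arguments. Unset Strict Implicit. Unset Printing Implicit Defensive.
Import Order.TTheory GRing.Theory Num.Theory.
Local Open Scope ring_scope.

Definition load n (s : 'I_n -> rat) (B : {set 'I_n}) : rat := \sum_(i in B) s i.

Definition is_solution n (s : 'I_n -> rat) (T : rat) (P : {set {set 'I_n}}) : Prop :=
  partition P [set: 'I_n] /\ (forall B, B \in P -> load s B <= T).

Definition is_optimal n (s : 'I_n -> rat) (T : rat) (P : {set {set 'I_n}}) : Prop :=
  is_solution s T P /\ (forall P', is_solution s T P' -> (#|P| <= #|P'|)%N).

Definition three_incompatible n (s : 'I_n -> rat) (T : rat) (A : {set 'I_n}) : Prop :=
  forall i j k, i \in A -> j \in A -> k \in A ->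
    i != j -> i != k -> j != k -> T < s i + s j + s k.

(* Lg is a largest 3-incompatible set of items: the large items. *)
Definition is_large_set n (s : 'I_n -> rat) (T : rat) (Lg : {set 'I_n}) : Prop :=
  three_incompatible s T Lg /\
  (forall A, three_incompatible s T A -> (#|A| <= #|Lg|)%N).

Definition mixed_bin n (Lg : {set 'I_n}) (B : {set 'I_n}) : bool :=
  (#|B :&: Lg| == 1)%N && (B :\: Lg != set0).

Definition greedy_pick n (s : 'I_n -> rat) (T : rat) (Rem S : {set 'I_n}) (x : 'I_n) : Prop :=
  [/\ x \in Rem, load s S + s x <= T &
      forall y, y \in Rem -> load s S + s y <= T -> s y <= s x].

Fixpoint greedy_run n (s : 'I_n -> rat) (T : rat) (Lg Rem : {set 'I_n})
    (bs : seq {set 'I_n}) (xs : seq 'I_n) : Prop :=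
  match bs, xs with
  | _, [::] => True
  | B :: bs', x :: xs' =>
      greedy_pick s T Rem (B :\: Lg) x /\ greedy_run s T Lg (Rem :\ x) bs' xs'
  | [::], _ :: _ => False
  end.

Definition large_of_bins n (Lg : {set 'I_n}) (bs : seq {set 'I_n}) : {set 'I_n} :=
  \bigcup_(B <- bs) (B :&: Lg).

Definition repack n (P : {set {set 'I_n}}) (Lg : {set 'I_n})
    (bs : seq {set 'I_n}) (xs : seq 'I_n) : {set {set 'I_n}} :=
  (P :\: [set B in bs]) :|: [set p.2 |: (p.1 :\: Lg) | p in zip bs xs].

(* Main.v *)
Require Import Defs.
From HB Require Import structures.
From mathcomp Require Import all_boot all_order all_algebra.
From mathcomp Require Import zify.
Import Order.TTheory GRing.Theory Num.Theory.
Local Open Scope ring_scope.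

Lemma zip_mem (A B : eqType) (u : seq A) (v : seq B) a b :
  (a, b) \in zip u v -> a \in u /\ b \in v.
Proof.
elim: u v => [|x u IH] [|y v] //=.
rewrite in_cons => /orP [/eqP [-> ->]|/IH [h1 h2]]; rewrite !in_cons ?eqxx //.
by rewrite h1 h2 !orbT.
Qed.

Arguments zip_mem {A B u v a b}.

Lemma zip_fun1 (A B : eqType) (u : seq A) (v : seq B) a b c :
  uniq u -> (a, b) \in zip u v -> (a, c) \in zip u v -> b = c.
Proof.
elim: u v => [|x u IH] [|y v] //=.
move=> /andP [xu uu]; rewrite !in_cons.
move=> /orP [/eqP e1|h1] /orP [/eqP e2|h2].
- by case: e1 e2 => _ -> [_ ->].
- case: e1 => ea _; subst; move: (zip_mem h2) => [h _]; by rewrite h in xu.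
- case: e2 => ea _; subst; move: (zip_mem h1) => [h _]; by rewrite h in xu.
- exact: IH uu h1 h2.
Qed.

Lemma zip_fun2 (A B : eqType) (u : seq A) (v : seq B) a b c :
  uniq v -> (a, c) \in zip u v -> (b, c) \in zip u v -> a = b.
Proof.
elim: u v => [|x u IH] [|y v] //=.
move=> /andP [xu uu]; rewrite !in_cons.
move=> /orP [/eqP e1|h1] /orP [/eqP e2|h2].
- by case: e1 e2 => -> _ [-> _].
- case: e1 => _ ea; subst; move: (zip_mem h2) => [_ h]; by rewrite h in xu.
- case: e2 => _ ea; subst; move: (zip_mem h1) => [_ h]; by rewrite h in xu.
- exact: IH uu h1 h2.
Qed.

Lemma zip_ex1 (A B : eqType) (u : seq A) (v : seq B) a :
  size u = size v -> a \in u -> exists b, (a, b) \in zip u v.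
Proof.
elim: u v => [|x u IH] [|y v] //= [e]; rewrite in_cons => /orP [/eqP ->|h].
- by exists y; rewrite in_cons eqxx.
- by case: (IH v e h) => b hb; exists b; rewrite in_cons hb orbT.
Qed.

Lemma zip_ex2 (A B : eqType) (u : seq A) (v : seq B) b :
  size u = size v -> b \in v -> exists a, (a, b) \in zip u v.
Proof.
elim: u v => [|x u IH] [|y v] //= [e]; rewrite in_cons => /orP [/eqP ->|h].
- by exists x; rewrite in_cons eqxx.
- by case: (IH v e h) => a ha; exists a; rewrite in_cons ha orbT.
Qed.

Lemma seq_max n (f : 'I_n -> rat) (l : seq 'I_n) :
  l != [::] -> exists2 x, x \in l & forall y, y \in l -> f y <= f x.
Proof.
elim: l => [|a l IH] // _.
case: l IH => [|b l] IH.
  by exists a; rewrite ?mem_seq1 // => y; rewrite mem_seq1 => /eqP ->.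
case: IH => // x xl hx.
case: (leP (f a) (f x)) => h.
- exists x; first by rewrite in_cons xl orbT.
  by move=> y; rewrite in_cons => /orP [/eqP ->|/hx].
- exists a; first by rewrite in_cons eqxx.
  move=> y; rewrite in_cons => /orP [/eqP ->|/hx h2] //.
  exact: le_trans h2 (ltW h).
Qed.

Lemma run_props n (s : 'I_n -> rat) T Lg bs : forall Rem xs,
  greedy_run s T Lg Rem bs xs ->
  [/\ (size xs <= size bs)%N, uniq xs, {subset xs <= Rem} &
     forall p, p \in zip bs xs -> load s (p.1 :\: Lg) + s p.2 <= T].
Proof.
elim: bs => [|B bs IH] Rem [|x xs] //=; try by move=> _; split => // p.
move=> [[xR fx _] /IH [h1 h2 h3 h4]]; split => //.
- by rewrite h2 andbT; apply/negP => /h3; rewrite in_setD1 eqxx.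
- by move=> y; rewrite in_cons => /orP [/eqP ->|/h3]; rewrite ?in_setD1 // => /andP [].
- by move=> p; rewrite in_cons => /orP [/eqP ->|/h4].
Qed.

Lemma run_exists n (s : 'I_n -> rat) T Lg bs : forall Rem xs,
  greedy_run s T Lg Rem bs xs ->
  (exists m : nat -> 'I_n,
     (forall j, (j < size bs)%N -> m j \in Rem /\
        load s (nth set0 bs j :\: Lg) + s (m j) <= T) /\
     (forall j k, (j < size bs)%N -> (k < size bs)%N -> m j = m k -> j = k)) ->
  (size xs < size bs)%N ->
  exists x, greedy_pick s T (Rem :\: [set x in xs]) (nth set0 bs (size xs) :\: Lg) x.
Proof.
elim: bs => [|B bs IH] Rem [|x xs] //=.
- move=> _ [m [hm _]] _.
  have [y0R y0f] := hm 0%N isT.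
  set l := [seq y <- enum Rem | load s (B :\: Lg) + s y <= T].
  have : l != [::].
    apply/eqP => e; have : m 0%N \in l by rewrite mem_filter y0f mem_enum.
    by rewrite e.
  move=> /(@seq_max _ s) [x xl hx]; exists x.
  move: xl; rewrite mem_filter mem_enum => /andP [fx xR].
  have E : Rem :\: [set x0 in [::]] = Rem.
    by apply/setP => z; rewrite !inE.
  rewrite E; split => // y yR fy; apply: hx.
  by rewrite mem_filter mem_enum fy yR.
move=> [[xR fx hx] hr] [m [hm hinj]] hlt.
have [y0R y0f] := hm 0%N isT.
have m0x : forall j, (j.+1 < (size bs).+1)%N -> m j.+1 = x -> m 0%N != x.
  move=> j hj e; apply/eqP => e0.
  by have := hinj 0%N j.+1 isT hj (etrans e0 (esym e)).
have [z hz] : exists z, greedy_pick s T ((Rem :\ x) :\: [set x0 in xs])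
                 (nth set0 bs (size xs) :\: Lg) z.
  apply: (IH _ _ hr) => //.
  exists (fun j => if m j.+1 == x then m 0%N else m j.+1); split.
  - move=> j hj; have [hR hf] := hm j.+1 hj.
    case: eqP => e.
    + rewrite in_setD1 (m0x j hj e) y0R; split => //.
      apply: le_trans hf; rewrite e lerD2l; apply: hx => //.
    + split; last by [].
      by rewrite in_setD1 hR andbT; apply/eqP.
  - move=> j k hj hk.
    case: eqP => e1; case: eqP => e2 e.
    + by have := hinj j.+1 k.+1 hj hk (etrans e1 (esym e2)); case.
    + by have := hinj 0%N k.+1 isT hk e.
    + by have := hinj j.+1 0%N hj isT e.
    + by have := hinj j.+1 k.+1 hj hk e; case.
exists z; move: hz.
suff -> : Rem :\: [set x0 in x :: xs] = (Rem :\ x) :\: [set x0 in xs] by [].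
by apply/setP => w; rewrite !inE negb_or; case: (w == x); rewrite ?andbF.
Qed.

Theorem claim11 (n : nat) (s : 'I_n -> rat) (T : rat)
    (P : {set {set 'I_n}}) (Lg : {set 'I_n}) (bs : seq {set 'I_n}) :
  (forall i, 0 <= s i) ->
  is_optimal s T P ->
  is_large_set s T Lg ->
  uniq bs ->
  (forall B, (B \in bs) = (B \in P) && mixed_bin Lg B) ->
  (* in each step a greedy choice exists *)
  (forall xs, greedy_run s T Lg (large_of_bins Lg bs) bs xs ->
     (size xs < size bs)%N ->
     exists x, greedy_pick s T (large_of_bins Lg bs :\: [set x in xs])
                 (nth set0 bs (size xs) :\: Lg) x) /\
  (* every complete greedy run yields a feasible, optimal solution *)
  (forall xs, greedy_run s T Lg (large_of_bins Lg bs) bs xs ->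
     size xs = size bs ->
     is_optimal s T (repack P Lg bs xs)).
Proof.
move=> s0 [[Ppart Pload] Popt] _ ubs hbs.
have bsP : forall B, B \in bs -> B \in P by move=> B; rewrite hbs => /andP [].
have bs1 : forall B, B \in bs -> #|B :&: Lg| = 1%N.
  by move=> B; rewrite hbs => /andP [_ /andP [/eqP]].
move: Ppart => /and3P [/eqP Pcov Ptriv P0].
have disj : forall A B i, A \in P -> B \in P -> A != B -> i \in A -> i \in B -> False.
  move=> A B i hA hB hne iA iB.
  move/trivIsetP: Ptriv => /(_ A B hA hB hne).
  rewrite -setI_eq0 => /eqP /setP /(_ i); by rewrite inE iA iB in_set0.
have memL : forall i, reflect (exists2 B, B \in bs & i \in B :&: Lg)
                               (i \in large_of_bins Lg bs).
  by move=> i; rewrite /large_of_bins bigcup_seq; apply: (iffP bigcupP).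
have cardL : (#|large_of_bins Lg bs| <= size bs)%N.
  have : {subset bs <= bs} by [].
  rewrite /large_of_bins; elim: {1 3 4}bs => [|B bs' IH] hsub.
    by rewrite big_nil cards0.
  rewrite big_cons cardsU bs1 ?hsub ?in_cons ?eqxx //=.
  have := IH (fun x h => hsub x (ltac:(by rewrite in_cons h orbT))) => H; rewrite addnC; apply: leq_trans (leq_subr _ _) _; by rewrite addn1 ltnS.
split.
- move=> xs hr hlt; apply: (run_exists _ _ _ _ _ _ _ hr) => //.
  have hb0 : (0 < size bs)%N by case: (size bs) hlt.
  have [l0 _] : exists l0, nth set0 bs 0 :&: Lg = [set l0].
    by apply/cards1P; rewrite bs1 // mem_nth.
  pose m j := odflt l0 [pick x in nth set0 bs j :&: Lg].
  have hm : forall j, (j < size bs)%N ->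
      exists2 l, nth set0 bs j :&: Lg = [set l] & m j = l.
    move=> j hj; have [l hl] : exists l, nth set0 bs j :&: Lg = [set l].
      by apply/cards1P; rewrite bs1 // mem_nth.
    exists l => //; rewrite /m; case: pickP => [y|h].
      by rewrite hl inE => /eqP.
    by have := h l; rewrite hl inE eqxx.
  exists m; split.
  + move=> j hj; have [l hl ->] := hm j hj; split.
      apply/memL; exists (nth set0 bs j); first exact: mem_nth.
      by rewrite hl inE.
    have := Pload _ (bsP _ (mem_nth set0 hj)).
    by rewrite /load (@big_setID _ _ _ _ _ Lg) /= hl big_set1 addrC.
  + move=> j k hj hk e; apply/eqP; apply: contraT => hne.
    have [l hl ml] := hm j hj; have [l' hl' ml'] := hm k hk.
    have ll : l = l' by rewrite -ml -ml'.
    have hA := bsP _ (mem_nth set0 hj); have hB := bsP _ (mem_nth set0 hk).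
    exfalso; apply: (disj _ _ l hA hB).
    * by rewrite nth_uniq.
    * have : l \in nth set0 bs j :&: Lg by rewrite hl inE.
      by rewrite inE => /andP [].
    * have : l \in nth set0 bs k :&: Lg by rewrite hl' inE ll.
      by rewrite inE => /andP [].
move=> xs hr hsz.
have [_ uxs subxs fits] := run_props _ _ _ _ _ _ _ hr.
have setxs : forall i, i \in large_of_bins Lg bs -> i \in xs.
  have E : [set x in xs] == large_of_bins Lg bs.
    rewrite eqEcard; apply/andP; split.
      by apply/subsetP => i; rewrite inE; apply: subxs.
    by rewrite cardsE (card_uniqP _) // hsz.
  by move=> i; rewrite -(eqP E) inE.
have xsbin : forall x, x \in xs -> exists2 B, B \in bs & x \in B :&: Lg.
  by move=> x /subxs /memL.
have xsLg : forall x, x \in xs -> x \in Lg.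
  by move=> x /xsbin [B _]; rewrite inE => /andP [].
set Q := repack P Lg bs xs.
have QP : forall C, C \in Q -> (C \in P /\ C \notin bs) \/
              exists2 p, p \in zip bs xs & C = p.2 |: (p.1 :\: Lg).
  move=> C; rewrite /Q /repack in_setU in_setD inE.
  case/orP => [/andP [nb cP]|/imsetP [p hp ->]].
    by left.
  by right; exists p.
have oldnew : forall C p i, C \in P -> C \notin bs -> p \in zip bs xs ->
    i \in C -> i \in p.2 |: (p.1 :\: Lg) -> False.
  move=> C [b x] i hC nb hp iC; have [hb hx] := zip_mem hp.
  rewrite /= in_setU1 in_setD => /orP [/eqP ei|/andP [_ ib]].
    subst i; have [B hB] := xsbin x hx; rewrite inE => /andP [xB _].
    apply: (disj C B x hC (bsP _ hB)) => //.
    by apply: contraNneq nb => ->.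
  apply: (disj C b i hC (bsP _ hb)) => //.
  by apply: contraNneq nb => ->.
split.
- split.
  + apply/and3P; split.
    * apply/eqP/setP => i; rewrite in_setT; apply/bigcupP.
      have : i \in cover P by rewrite Pcov in_setT.
      case/bigcupP => C hC iC.
      case: (boolP (C \in bs)) => Cbs.
      - case: (boolP (i \in Lg)) => iLg.
        + have ixs : i \in xs by apply: setxs; apply/memL; exists C; rewrite // inE iC.
          have [b hb] := zip_ex2 _ _ _ _ _ (esym hsz) ixs.
          exists (i |: (b :\: Lg)); last by rewrite setU11.
          by rewrite /Q /repack in_setU; apply/orP; right; apply/imsetP; exists (b, i).
        + have [x hx] := zip_ex1 _ _ _ _ _ (esym hsz) Cbs.
          exists (x |: (C :\: Lg)); last by rewrite in_setU1 in_setD iLg iC orbT.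
          by rewrite /Q /repack in_setU; apply/orP; right; apply/imsetP; exists (C, x).
      - exists C => //.
        by rewrite /Q /repack in_setU in_setD inE Cbs hC.
    * apply/trivIsetP => A B hA hB hne.
      rewrite -setI_eq0; apply/eqP/setP => i; rewrite inE in_set0.
      apply/negP => /andP [iA iB].
      case: (QP A hA) => [[hA1 hA2]|[p hp eA]]; case: (QP B hB) => [[hB1 hB2]|[q hq eB]].
      - exact: (disj A B i).
      - by apply: (oldnew A q i); rewrite // -eB.
      - by apply: (oldnew B p i); rewrite // -eA.
      - subst A B.
        have pq : p != q by apply: contraNneq hne => ->.
        clear hne hA hB.
        move: p q hp hq pq iA iB => [b x] [c y] hp hq pq /=.
        have [hb hx] := zip_mem hp; have [hc hy] := zip_mem hq.
        rewrite !in_setU1 !in_setD.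
        case/orP => [/eqP ex|/andP [iL ib]]; case/orP => [/eqP ey|/andP [iL' ic]].
        + subst i; subst x.
          by have := zip_fun2 _ _ _ _ _ _ _ uxs hp hq => e; subst c; rewrite eqxx in pq.
        + by subst i; rewrite xsLg in iL'.
        + by subst i; rewrite xsLg in iL.
        + apply: (disj b c i (bsP _ hb) (bsP _ hc)) => //.
          apply: contraNneq pq => e; subst c.
          by have := zip_fun1 _ _ _ _ _ _ _ ubs hp hq => e; subst y.
    * apply/negP => /QP [[h _]|[p _ e]]; first by rewrite h in P0.
      have : p.2 \in set0 by rewrite e setU11.
      by rewrite in_set0.
  + move=> C /QP [[h _]|[[b x] hp ->]]; first exact: Pload.
    rewrite /load big_setU1 /=; last by rewrite in_setD xsLg // (zip_mem hp).2.
    by rewrite addrC; exact: (fits _ hp).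
- move=> P' hP'; apply: leq_trans (Popt P' hP').
  set X := [set B in bs].
  have XP : X \subset P by apply/subsetP => B; rewrite inE; apply: bsP.
  have cX : #|X| = size bs by rewrite cardsE (card_uniqP _).
  have c1 : #|P :\: X| = (#|P| - size bs)%N by rewrite cardsD (setIidPr XP) cX.
  have c2 : (#|[set p.2 |: (p.1 :\: Lg) | p in zip bs xs]| <= size bs)%N.
    apply: leq_trans (leq_imset_card _ _) _.
    by apply: leq_trans (card_size _) _; rewrite size_zip hsz minnn.
  have c3 : (size bs <= #|P|)%N by rewrite -cX; apply: subset_leq_card.
  rewrite /Q /repack cardsU c1; apply: leq_trans (leq_subr _ _) _.
  apply: leq_trans (leq_add (leqnn _) c2) _; lia.
Qed.
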